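(* Let $p\ge 2$, $\delta_i\ge 0$ and $g_i(t)=\frac1p(|t|-\delta_i)_+^p$ for $t\in\mathbb{R}$. For every $T\ge \delta_i$, \[ g''_{i}(t)\ge (p-1)\,\left(\frac{T-\delta_i}{T}\right)^{p-2}\,\left(T^2+(|t|-T)_+^2\right)^\frac{p-2}{2}\qquad\text{for every } |t|\ge T. \]
   Context: $(\cdot)_+$ denotes the positive part; $g_i''(t)=(p-1)(|t|-\delta_i)_+^{p-2}$ for $|t|>\delta_i$. *)

(* Defs.v *)
From mathcomp Require Import all_boot all_order all_algebra.
From mathcomp Require Import all_classical all_reals all_analysis.
Set Implicit Arguments. Unset Strict Implicit. Unset Printing Implicit Defensive.
Import Order.TTheory GRing.Theory Num.Theory.
Local Open Scope ring_scope.

Definition pos_part {R : realType} (x : R) : R := Num.max x 0.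

Definition g {R : realType} (p delta t : R) : R :=
  p^-1 * (pos_part (`|t| - delta)) `^ p.

(* g_i''(t) = (p-1) (|t| - delta)_+^(p-2), as given in the paper's context *)
Definition g'' {R : realType} (p delta t : R) : R :=
  (p - 1) * (pos_part (`|t| - delta)) `^ (p - 2).

(* Main.v *)
Require Import Defs.
From mathcomp Require Import all_boot all_order all_algebra.
From mathcomp Require Import all_classical all_reals all_analysis.
From mathcomp Require Import ring lra.
Import Order.TTheory GRing.Theory Num.Theory.
Local Open Scope ring_scope.

Theorem lemmaA3 (R : realType) (p delta T : R) :
  2 <= p -> 0 <= delta -> delta <= T ->
  forall t : R, T <= `|t| ->
    (p - 1) * ((T - delta) / T) `^ (p - 2)
      * (T ^+ 2 + (pos_part (`|t| - T)) ^+ 2) `^ ((p - 2) / 2)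
    <= g'' p delta t.
Proof.
move=> hp hd hdT t hT.
rewrite /g'' /pos_part.
set s := `|t|.
have T0 : 0 <= T by apply: le_trans hdT.
have -> : Num.max (s - T) 0 = s - T by apply/max_idPl; rewrite subr_ge0.
have -> : Num.max (s - delta) 0 = s - delta.
  by apply/max_idPl; rewrite subr_ge0; apply: le_trans hT.
set y := T ^+ 2 + (s - T) ^+ 2.
have y0 : 0 <= y by rewrite /y addr_ge0 // sqr_ge0.
have x0 : 0 <= (T - delta) / T by rewrite divr_ge0 // subr_ge0.
rewrite -mulrA ler_pM2l; last by rewrite subr_gt0; apply: lt_le_trans hp; rewrite ltr1n.
rewrite mulrC (mulrC _ 2^-1) powRrM powR12_sqrt //.
rewrite -powRM ?sqrtr_ge0 //.
apply: ge0_ler_powR; first by rewrite subr_ge0.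
- by rewrite nnegrE mulr_ge0 ?sqrtr_ge0.
- by rewrite nnegrE subr_ge0; apply: le_trans hT.
have hs : Num.sqrt y <= s.
  have s0 : 0 <= s by apply: le_trans hT.
  rewrite -(ger0_norm s0) -sqrtr_sqr ler_sqrt ?sqr_ge0 //.
  have h1 : 0 <= s - T by rewrite subr_ge0.
  rewrite /y; nra.
have hm : (T - delta) / T * Num.sqrt y <= (T - delta) / T * s.
  by rewrite ler_wpM2l.
rewrite mulrC; apply: le_trans hm _.
have [->|Tn0] := eqVneq T 0.
  by rewrite invr0 mulr0 mul0r subr_ge0; apply: le_trans hT.
have Tp : 0 < T by rewrite lt_def Tn0 T0.
rewrite mulrAC ler_pdivrMr //.
have h2 : 0 <= delta * (s - T) by rewrite mulr_ge0 // subr_ge0.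
have e : (s - delta) * T - (T - delta) * s = delta * (s - T) by ring.
by rewrite -subr_ge0 e.
Qed.
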